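(* Let $G=(V,E)$ be a graph and $W$ a vertex cover of $G$. Let $\Omega$ be a potential maximal clique of $G$ having an active separator $S\subseteq\Omega$ with an active pair $x,y\in S$. Let $C$ be the unique connected component of $G-S$ intersecting $\Omega$, and let $D_S$ be the union of all other connected components of $G-S$. Let $D_x$ be the union of those components of $G-\Omega$ that are contained in $C$ and contain a neighbor of $x$, and let $D_y$ be the union of those components of $G-\Omega$ that are contained in $C$ and contain no neighbor of $x$. Put $D_S^W=D_S\cap W$, $D_x^W=D_x\cap W$, $D_y^W=D_y\cap W$. Then at least one of the following holds: (1) there is a vertex $t\in\Omega$ with $\Omega\setminus S=N(t)\cap C$; (2) there is a vertex $t\in\Omega$ with $\Omega=N[t]$; (3) for every vertex $z\notin W$, we have $z\in\Omega$ if and only if either (a) $N(z)$ intersects $D_S^W$ and intersects $D_x^W\cup D_y^W$, or (b) $N(z)$ does not intersect $D_S^W$, but $N(z)$ intersects each of $D_x^W\cup\{x\}$, $D_y^W\cup\{y\}$ and $D_x^W\cup D_y^W$.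
   Context: All graphs are finite, simple and undirected; $N(t)$ is the open neighborhood, $N[t]=N(t)\cup\{t\}$, and for a set $X$, $N(X)=\bigcup_{v\in X}N(v)\setminus X$. A vertex cover is a set of vertices meeting every edge. A minimal separator of $G$ is a set $S$ that is, for some vertices $u,v$, an inclusion-minimal set whose removal puts $u,v$ in different connected components. A graph is chordal if every cycle of length at least 4 has a chord; a minimal triangulation of $G$ is a chordal supergraph $H$ on the same vertex set such that no proper subset of $E(H)$ containing $E(G)$ gives a chordal graph. A set $\Omega\subseteq V$ is a potential maximal clique of $G$ if it is a maximal clique of some minimal triangulation of $G$. (Equivalently: letting $C_1,\dots,C_p$ be the components of $G-\Omega$ and $S_i=N(C_i)$, each $S_i$ is a proper subset of $\Omega$, and any two non-adjacent vertices of $\Omega$ both have neighbors in some common $C_i$; in that case the $S_i$ are exactly the minimal separators of $G$ contained in $\Omega$, and for each such $S_i$ the set $\Omega\setminus S_i$ lies in a unique component of $G-S_i$.) Active separator: let $\Omega$ be a potential maximal clique, $C_1,\dots,C_p$ the components of $G-\Omega$ and $S_i=N(C_i)$. Let $G^+$ be obtained from $G$ by making a clique of every $S_j$ ($2\le j\le p$) with $S_j\not\subseteq S_1$. Then $S_1$ is an active separator for $\Omega$ if $\Omega$ is not a clique of $G^+$, and a pair $x,y\in\Omega$ non-adjacent in $G^+$ is an active pair (necessarily $x,y\in S_1$). $\Omega$ has an active separator if some $S_i$ is active for $\Omega$ (with the roles of indices permuted). *)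

(* Defs.v *)
From mathcomp Require Import all_boot.
Set Implicit Arguments.
Unset Strict Implicit.
Unset Printing Implicit Defensive.

Section Graphs.
Variable T : finType.

Definition simple_graph (e : rel T) : Prop := symmetric e /\ irreflexive e.
Definition vertex_cover (e : rel T) (W : {set T}) : Prop :=
  forall u v, e u v -> (u \in W) || (v \in W).

Definition nbr (e : rel T) (t : T) : {set T} := [set u | e t u].
Definition cnbr (e : rel T) (t : T) : {set T} := t |: nbr e t.
Definition nbrs (e : rel T) (X : {set T}) : {set T} :=
  (\bigcup_(v in X) nbr e v) :\: X.

Definition restr (e : rel T) (X : {set T}) : rel T :=
  [rel a b | [&& a \notin X, b \notin X & e a b]].
(* connected component of G - X containing v (meaningful for v \notin X) *)
Definition comp (e : rel T) (X : {set T}) (v : T) : {set T} :=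
  [set u | connect (restr e X) v u].
Definition comps (e : rel T) (X : {set T}) : {set {set T}} :=
  [set comp e X v | v in ~: X].

Definition chordal (H : rel T) : Prop :=
  forall s : seq T, uniq s -> 3 < size s -> cycle H s ->
    exists x y, [/\ x \in s, y \in s, H x y, next s x != y & next s y != x].

Definition triangulation (e H : rel T) : Prop :=
  [/\ simple_graph H, subrel e H & chordal H].
Definition minimal_triangulation (e H : rel T) : Prop :=
  triangulation e H /\
  forall H' : rel T, triangulation e H' -> subrel H' H -> subrel H H'.

Definition clique (H : rel T) (K : {set T}) : Prop :=
  forall x y, x \in K -> y \in K -> x != y -> H x y.
Definition maximal_clique (H : rel T) (K : {set T}) : Prop :=
  clique H K /\ forall v, v \notin K -> exists2 x, x \in K & ~~ H v x.

Definition pmc (e : rel T) (Om : {set T}) : Prop :=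
  exists H : rel T, minimal_triangulation e H /\ maximal_clique H Om.

(* G^+ : make a clique of every S_j = N(C_j), C_j a component of G - Om,
   with S_j not contained in S *)
Definition plus_rel (e : rel T) (Om S : {set T}) : rel T :=
  fun x y => e x y ||
    ((x != y) && [exists C in comps e Om,
        [&& x \in nbrs e C, y \in nbrs e C & ~~ (nbrs e C \subset S)]]).

Definition active_sep (e : rel T) (Om S : {set T}) : Prop :=
  [/\ pmc e Om,
      exists2 C, C \in comps e Om & S = nbrs e C
    & ~ clique (plus_rel e Om S) Om].

Definition active_pair (e : rel T) (Om S : {set T}) (x y : T) : Prop :=
  [/\ active_sep e Om S, x \in Om, y \in Om, x != y & ~~ plus_rel e Om S x y].

End Graphs.

(* Main.v *)
Require Import Defs.
From mathcomp Require Import all_boot.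
From Stdlib Require Import Classical.
Set Implicit Arguments.
Unset Strict Implicit.
Unset Printing Implicit Defensive.

Section Aux.
Variable T : finType.
Implicit Types (X A B D : {set T}) (u v w d : T).

Lemma ndisjP A B : reflect (exists u, u \in A /\ u \in B) (~~ [disjoint A & B]).
Proof.
rewrite -setI_eq0; apply: (iffP (set0Pn _)) => [[u]|[u [H1 H2]]].
  by rewrite inE => /andP[]; exists u.
by exists u; rewrite inE H1.
Qed.

Lemma conn_stay (r : rel T) (P : pred T) :
  (forall u w, P u -> r u w -> P w) -> forall u w, P u -> connect r u w -> P w.
Proof.
move=> cl u w Pu /connectP [p pth ->]; elim: p u Pu pth => //= a p IH u Pu /andP[ra pa].
exact: IH (cl _ _ Pu ra) pa.
Qed.

Variable e : rel T.
Hypothesis esym : symmetric e.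

Lemma restr_sym X : symmetric (restr e X).
Proof. by move=> a b; rewrite /restr /= esym; case: (a \in X); case: (b \in X). Qed.

Lemma comp_self X v : v \in Defs.comp e X v.
Proof. by rewrite inE connect0. Qed.

Lemma comp_notin X v u : v \notin X -> u \in Defs.comp e X v -> u \notin X.
Proof.
move=> vX; rewrite inE; apply: (conn_stay (P := fun u => u \notin X)) => //.
by move=> a b _ /and3P[].
Qed.

Lemma comp_eq X v u : u \in Defs.comp e X v -> Defs.comp e X u = Defs.comp e X v.
Proof.
rewrite inE => cvu; apply/setP => w; rewrite !inE.
apply/idP/idP => H; first exact: connect_trans cvu H.
apply: connect_trans _ H; by rewrite (sym_connect_sym (restr_sym X)).
Qed.

Lemma comps_notin X D u : D \in comps e X -> u \in D -> u \notin X.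
Proof. by case/imsetP => v; rewrite inE => vX -> /(comp_notin vX). Qed.

Lemma comps_eq X D u : D \in comps e X -> u \in D -> D = Defs.comp e X u.
Proof. by case/imsetP => v _ -> /comp_eq ->. Qed.

Lemma comps_inter X D1 D2 u : D1 \in comps e X -> D2 \in comps e X -> u \in D1 -> u \in D2 -> D1 = D2.
Proof. by move=> H1 H2 u1 u2; rewrite (comps_eq H1 u1) (comps_eq H2 u2). Qed.

Lemma comp_in_comps X u : u \notin X -> Defs.comp e X u \in comps e X.
Proof. by move=> uX; apply/imsetP; exists u; rewrite ?inE. Qed.

Lemma comps_edge X D u w : D \in comps e X -> u \in D -> e u w -> w \notin X -> w \in D.
Proof.
move=> HD uD euw wX; rewrite (comps_eq HD uD) inE; apply: connect1.
by rewrite /restr /= (comps_notin HD uD) wX euw.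
Qed.

Lemma nbrsP X D w : D \in comps e X ->
  reflect (exists2 d, d \in D & e d w /\ w \notin D) (w \in nbrs e D).
Proof.
move=> HD; rewrite /nbrs inE; apply: (iffP andP) => [[wD /bigcupP[d dD]]|[d dD [edw wD]]].
  by rewrite inE => edw; exists d.
by split => //; apply/bigcupP; exists d => //; rewrite inE.
Qed.

Lemma nbrs_sub X D w : D \in comps e X -> w \in nbrs e D -> w \in X.
Proof.
move=> HD /(nbrsP _ HD) [d dD [edw wD]]; apply/negPn/negP => wX.
by rewrite (comps_edge HD dD edw wX) in wD.
Qed.

Lemma in_nbrs X D d w : D \in comps e X -> d \in D -> e d w -> w \in X -> w \in nbrs e D.
Proof.
move=> HD dD edw wX; apply/(nbrsP _ HD); exists d => //; split => //.
by apply/negP => /(comps_notin HD); rewrite wX.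
Qed.

End Aux.

Section Cyc.
Variable T : eqType.

Lemma next_mod (s : seq T) x0 i : uniq s -> i < size s ->
  next s (nth x0 s i) = nth x0 s (i.+1 %% size s).
Proof.
move=> U lti; rewrite next_nth mem_nth //.
case: s U lti => [//|y p] U lti; rewrite index_uniq //=.
case: (ltnP i.+1 (size p).+1) => [lt|ge].
  by rewrite modn_small //=; apply: set_nth_default; rewrite -ltnS.
have eq : i = size p by apply/eqP; rewrite eqn_leq -ltnS lti -ltnS ge.
by rewrite eq modnn nth_default.
Qed.

Lemma orbit_all (s : seq T) (P : pred T) x0 : uniq s -> x0 \in s -> P x0 ->
  (forall x, x \in s -> P x -> P (next s x)) -> forall x, x \in s -> P x.
Proof.
move=> U x0s Px0 cl.
have n0 : 0 < size s by case: s x0s {U cl}.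
pose k := index x0 s.
have key : forall m, P (nth x0 s ((k + m) %% size s)).
  elim=> [|m IH]; first by rewrite addn0 modn_small ?nth_index ?index_mem.
  have := cl _ (mem_nth _ (ltn_pmod _ n0)) IH.
  by rewrite next_mod ?ltn_pmod // -addn1 modnDml -addnA addn1.
move=> x xs; have := key ((size s - k) + index x s).
have kl : k <= size s by apply: ltnW; rewrite index_mem.
by rewrite addnA subnKC // modnDl modn_small ?index_mem // nth_index.
Qed.

End Cyc.

Section F2.
Variable T : finType.
Variable e H : rel T.
Variables (Om : {set T}) (a b : T).
Hypothesis esym : symmetric e.
Hypothesis Hsimple : simple_graph H.
Hypothesis eH : subrel e H.
Hypothesis Hch : chordal H.
Hypothesis OmK : clique H Om.
Hypothesis nab : forall D, D \in comps e Om -> ~~ ((a \in nbrs e D) && (b \in nbrs e D)).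

Definition Hp : rel T := fun u v =>
  [|| e u v,
      [exists D in comps e Om, [&& u \in D :|: nbrs e D, v \in D :|: nbrs e D & H u v]]
    | [&& u \in Om, v \in Om, u != v & ~~ (((u == a) && (v == b)) || ((u == b) && (v == a)))]].

Lemma Hp_sym : symmetric Hp.
Proof.
case: Hsimple => Hs _ u v; rewrite /Hp esym Hs eq_sym.
congr [|| _, _ | _].
  by apply: eq_existsb => D; case: (u \in _); case: (v \in _).
by rewrite [(u == a) && _]andbC [(u == b) && _]andbC [_ || (_ && _)]orbC; case: (u \in Om); case: (v \in Om).
Qed.

Lemma Hp_H : subrel Hp H.
Proof.
move=> u v /or3P[/eH //| /existsP[D /and4P[_ _ _ //]] | /and4P[uO vO uv _]].
exact: OmK.
Qed.

Lemma edgeD D u w : D \in comps e Om -> u \in D -> Hp u w -> w \notin D -> w \in nbrs e D.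
Proof.
move=> HD uD /or3P[euw | /existsP[D' /and4P[HD' uD' wD' _]] | /and4P[uO _ _ _]] wD.
- have [wO|wO] := boolP (w \in Om); first exact: in_nbrs HD uD euw wO.
  by rewrite (comps_edge esym HD uD euw wO) in wD.
- have uO := comps_notin HD uD.
  move: uD'; rewrite inE => /orP[uD'|/(nbrs_sub esym HD') uO']; last by rewrite uO' in uO.
  have eD := comps_inter esym HD HD' uD uD'; subst D'.
  by move: wD'; rewrite inE (negbTE wD).
- by rewrite (negbTE (comps_notin HD uD)) in uO.
Qed.

Lemma chord_inD D s : D \in comps e Om -> {subset s <= D :|: nbrs e D} ->
  uniq s -> 3 < size s -> cycle Hp s ->
  exists x y, [/\ x \in s, y \in s, Hp x y, next s x != y & next s y != x].
Proof.
move=> HD sub U sz cyc.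
have [x [y [xs ys Hxy n1 n2]]] := Hch U sz (sub_cycle Hp_H cyc).
exists x, y; split => //; apply/or3P; apply: Or32; apply/existsP; exists D.
by rewrite HD sub // sub // Hxy.
Qed.

Lemma chord_Om s : {subset s <= Om} -> uniq s -> 3 < size s -> cycle Hp s ->
  exists x y, [/\ x \in s, y \in s, Hp x y, next s x != y & next s y != x].
Proof.
case: s => [|a0 [|a1 [|a2 [|a3 r]]]] // sub U _ _.
set s := [:: a0, a1, a2, a3 & r].
have [N0 [N1 N2]] : next s a0 = a1 /\ next s a1 = a2 /\ next s a2 = a3.
  rewrite !next_nth !inE !eqxx ?orbT.
  have UU := U; rewrite /= !inE !negb_or in UU.
  case/and4P: UU => /and3P[n01 n02 n03] /andP[n12 n13] _ _.
  by rewrite /= !eqxx (negbTE n01) (negbTE n02) (negbTE n12).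
have UU := U; rewrite /= !inE !negb_or in UU.
case/and4P: UU => /and3P[n01 n02 n03] /andP[n12 n13] /andP[n23 _] _.
case/andP: n03 => n03 _; case/andP: n13 => n13 _.
have inj : {in s &, injective (next s)}.
  by move=> u v _ _ /(congr1 (prev s)); rewrite !prev_next.
have Om0 : a0 \in Om by apply: sub; rewrite !inE eqxx.
have Om1 : a1 \in Om by apply: sub; rewrite !inE eqxx ?orbT.
have Om2 : a2 \in Om by apply: sub; rewrite !inE eqxx ?orbT.
have Om3 : a3 \in Om by apply: sub; rewrite !inE eqxx ?orbT.
have [bad02|good02] := boolP (((a0 == a) && (a2 == b)) || ((a0 == b) && (a2 == a))).
  exists a1, a3; split.
  - by rewrite !inE eqxx ?orbT.
  - by rewrite !inE eqxx ?orbT.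
  - apply/or3P; apply: Or33; rewrite Om1 Om3 n13 /=.
    apply/negP => bad13.
    case/orP: bad02 => /andP[/eqP E0 /eqP E2]; case/orP: bad13 => /andP[/eqP E1 _];
      by move: n01 n12; rewrite E0 E2 E1 ?eqxx //= eq_sym ?eqxx.
  - by rewrite N1.
  - apply/eqP => E; have : a3 = a0.
      by apply: inj; [rewrite !inE eqxx ?orbT | rewrite !inE eqxx ?orbT | rewrite E N0].
    by move/eqP; rewrite eq_sym (negbTE n03).
exists a0, a2; split.
- by rewrite !inE eqxx ?orbT.
- by rewrite !inE eqxx ?orbT.
- by apply/or3P; apply: Or33; rewrite Om0 Om2 n02.
- by rewrite N0.
- by rewrite N2 eq_sym.
Qed.


Lemma nbrs_notin (D : {set T}) u : u \in nbrs e D -> u \notin D.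
Proof. by rewrite /nbrs inE => /andP[]. Qed.

Lemma Hp_chordal : chordal Hp.
Proof.
move=> s U sz cyc.
have [allO|] := boolP (all (mem Om) s).
  by apply: chord_Om => // u us; exact: (allP allO u us).
case/allPn => v vs vO.
set D := Defs.comp e Om v.
have HD : D \in comps e Om := comp_in_comps e vO.
have vD : v \in D by rewrite inE connect0.
apply: NNPP => nochord.
have NC : forall x y, x \in s -> y \in s -> Hp x y -> (next s x = y) \/ (next s y = x).
  move=> x y xs ys hxy; apply: NNPP => nn; apply: nochord; exists x, y; split => //;
  by apply/eqP => E; apply: nn; first [by left | by right].
suff sub : {subset s <= D :|: nbrs e D} by apply: nochord; exact: chord_inD HD sub U sz cyc.
set f := next s.
have cycE : forall u, u \in s -> Hp u (f u) by move=> u us; exact: next_cycle cyc us.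
have fs : forall u, u \in s -> f u \in s by move=> u us; rewrite /f mem_next.
have finj : forall u w, f u = f w -> u = w.
  by move=> u w /(congr1 (prev s)); rewrite /f !prev_next.
have [/hasP[u0 u0s /andP[u0D pD]]|/hasPn noexit] := boolP (has (fun u => (u \in D) && (f u \notin D)) s); last first.
  have allD : forall x, x \in s -> x \in D.
    apply: (orbit_all (P := fun x => x \in D) U vs vD) => x xs xD.
    by have := noexit x xs; rewrite xD /= negbK.
  by move=> u us; rewrite inE allD.
set p := f u0 in pD.
have ps : p \in s by rewrite fs.
have pN : p \in nbrs e D := edgeD HD u0D (cycE u0 u0s) pD.
have [/hasP[w0 w0s /andP[w0D qD]]|/hasPn noentry] := boolP (has (fun w => (w \in D) && (prev s w \notin D)) s); last first.
  have allnD : forall x, x \in s -> x \notin D.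
    apply: (orbit_all (P := fun x => x \notin D) U ps pD) => x xs xD.
    apply/negP => fxD; have := noentry _ (fs x xs); rewrite fxD /= /f prev_next //.
    by rewrite (negbTE xD).
  by move: (allnD v vs); rewrite vD.
set q := prev s w0 in qD.
have qs : q \in s by rewrite mem_prev.
have fq : f q = w0 by rewrite /f /q next_prev.
have qN : q \in nbrs e D.
  by apply: (edgeD HD w0D) => //; rewrite Hp_sym -fq; exact: cycE.
have R : forall r, r \in s -> r \in nbrs e D -> r != p -> r = f p.
  move=> r rs rN rp.
  have hrp : Hp r p.
    apply/or3P; apply: Or33; rewrite (nbrs_sub esym HD rN) (nbrs_sub esym HD pN) rp /=.
    apply/negP => bad; have := nab HD.
    by case/orP: bad => /andP[/eqP Ea /eqP Eb]; rewrite -Ea -Eb ?rN ?pN // andbC rN pN.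
  case: (NC r p rs ps hrp) => // E.
  have Er : r = u0 by apply: finj.
  by move: (nbrs_notin rN); rewrite Er u0D.
apply: (orbit_all (P := fun x => x \in D :|: nbrs e D) U vs) => [|x xs]; first by rewrite inE vD.
rewrite -/f inE => /orP[xD|xN].
  have [fxD|fxD] := boolP (f x \in D); first by rewrite inE fxD.
  by rewrite inE (edgeD HD xD (cycE x xs) fxD) orbT.
have [xp|xp] := eqVneq x p.
  have [qp|qp] := eqVneq q p.
    by rewrite xp -qp fq inE w0D.
  by rewrite xp -(R q qs qN qp) inE qN orbT.
have Ex := R x xs xN xp.
have [qp|qp] := eqVneq q p.
  by move: (nbrs_notin xN); rewrite Ex -qp fq w0D.
by rewrite Ex -(R q qs qN qp) fq inE w0D.
Qed.

End F2.

Lemma pmc_F2 (T : finType) (e : rel T) (Om : {set T}) a b :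
  simple_graph e -> pmc e Om -> a \in Om -> b \in Om -> a != b -> ~~ e a b ->
  exists2 D, D \in comps e Om & (a \in nbrs e D) && (b \in nbrs e D).
Proof.
move=> [esym eirr] [H [[[Hs eH Hch] Hmin] [OmK _]]] aO bO ab nab.
apply: NNPP => nex.
have nab' : forall D, D \in comps e Om -> ~~ ((a \in nbrs e D) && (b \in nbrs e D)).
  by move=> D HD; apply/negP => Hab; apply: nex; exists D.
have tri : triangulation e (Hp e H Om a b).
  split.
  - split; first exact: Hp_sym.
    move=> u; apply/negP => /or3P[|/existsP[D /and4P[_ _ _]]|/and4P[_ _]].
    + by rewrite eirr.
    + by case: Hs => _ ->.
    + by rewrite eqxx.
  - by move=> u v euv; rewrite /Hp euv.
  - exact: Hp_chordal.
have := Hmin _ tri (Hp_H eH OmK) a b (OmK a b aO bO ab).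
rewrite /Hp /= (negbTE nab) /= !eqxx /= !andbF orbF.
case/existsP => D /and4P[HD aD bD _].
have aN : a \in nbrs e D.
  by move: aD; rewrite inE => /orP[/(comps_notin HD)|//]; rewrite aO.
have bN : b \in nbrs e D.
  by move: bD; rewrite inE => /orP[/(comps_notin HD)|//]; rewrite bO.
by have := nab' D HD; rewrite aN bN.
Qed.

Theorem lemma2 (T : finType) (e : rel T) (W Om S C : {set T}) (x y : T) :
  simple_graph e ->
  vertex_cover e W ->
  pmc e Om ->
  S \subset Om ->
  active_sep e Om S ->
  x \in S -> y \in S ->
  active_pair e Om S x y ->
  C \in comps e S ->
  ~~ [disjoint C & Om] ->
  let DS := \bigcup_(D in comps e S | D != C) D in
  let Dx := \bigcup_(D in comps e Om | (D \subset C) && ~~ [disjoint D & nbr e x]) D in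
  let Dy := \bigcup_(D in comps e Om | (D \subset C) && [disjoint D & nbr e x]) D in
  let DSW := DS :&: W in
  let DxW := Dx :&: W in
  let DyW := Dy :&: W in
  (exists2 t, t \in Om & Om :\: S = nbr e t :&: C) \/
  (exists2 t, t \in Om & Om = cnbr e t) \/
  (forall z, z \notin W ->
     (z \in Om <->
      ((~~ [disjoint nbr e z & DSW] && ~~ [disjoint nbr e z & DxW :|: DyW]) \/
       [/\ [disjoint nbr e z & DSW],
           ~~ [disjoint nbr e z & x |: DxW],
           ~~ [disjoint nbr e z & y |: DyW]
         & ~~ [disjoint nbr e z & DxW :|: DyW]]))).
Proof.
move=> sg Wc pOm SO [_ [C1 HC1 ES] _] xS yS [_ xO yO xy nplus] HC CO.
move=> DS Dx Dy DSW DxW DyW.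
rewrite {}/DSW {}/DxW {}/DyW {}/DS {}/Dx {}/Dy.
have [esym eirr] := sg.
have F2 := pmc_F2 sg pOm.
have nxy : ~~ e x y by move: nplus; rewrite /plus_rel; case: (e x y).
have npl : forall D, D \in comps e Om -> x \in nbrs e D -> y \in nbrs e D -> nbrs e D \subset S.
  move=> D HD xD yD; apply/negPn/negP => nsub; move: nplus; rewrite /plus_rel xy /=.
  by rewrite negb_or => /andP[_ /existsP]; apply; exists D; rewrite HD xD yD nsub.
have Wn : forall z u, z \notin W -> e z u -> u \in W.
  by move=> z u zW ezu; have := Wc z u ezu; rewrite (negbTE zW).
have SinO := subsetP SO.
have connS : forall u w, connect (restr e Om) u w -> connect (restr e S) u w.
  apply: connect_sub => u w /and3P[uO wO euw]; apply: connect1.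
  rewrite /restr /= euw andbT; apply/andP; split; apply/negP => /SinO; by [rewrite (negbTE uO) | rewrite (negbTE wO)].
have Cedge : forall u w, u \in C -> e u w -> w \notin S -> w \in C.
  by move=> u w uC euw wS; exact (comps_edge esym HC uC euw wS).
have notS : forall u, u \notin Om -> u \notin S by move=> u uO; apply/negP => /SinO; rewrite (negbTE uO).
have compOmS : forall D u, D \in comps e Om -> u \in D -> u \in C -> D \subset C.
  move=> D u HD uD uC; apply/subsetP => d dD.
  rewrite (comps_eq esym HC uC) inE; apply: connS.
  by move: dD; rewrite (comps_eq esym HD uD) inE.
have [c [cC cO]] := ndisjP _ _ CO.
have cS : c \notin S := comps_notin HC cC.
have P1 : forall a, a \in Om -> a \notin S -> a \in C.
  move=> a aO aS; have [ac|ac] := eqVneq a c; first by rewrite ac.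
  have [eca|eca] := boolP (e c a); first exact: Cedge cC eca aS.
  have ca : c != a by rewrite eq_sym ac.
  have [D HD /andP[cN aN]] := F2 c a cO aO ca eca.
  have [d1 d1D [ed1c _]] := nbrsP _ HD cN.
  have [d2 d2D [ed2a _]] := nbrsP _ HD aN.
  have d1C : d1 \in C by apply: Cedge cC _ (notS _ (comps_notin HD d1D)); rewrite esym.
  have d2C : d2 \in C := subsetP (compOmS D d1 HD d1D d1C) d2 d2D.
  exact: Cedge d2C ed2a aS.
have P3 : forall D, D \in comps e Om -> D \subset C -> ~~ (nbrs e D \subset S).
  move=> D HD DC; apply/negP => sub.
  have [v vO EDv] := imsetP HD; rewrite inE in vO.
  have vD : v \in D by rewrite EDv inE connect0.
  have vC := subsetP DC v vD.
  have Hconn : connect (restr e S) v c by move: cC; rewrite (comps_eq esym HC vC) inE.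
  have cl : forall u w, u \in D -> restr e S u w -> w \in D.
    move=> u w uD /and3P[_ wS euw]; have [wO|wO] := boolP (w \in Om).
      by have := subsetP sub w (in_nbrs HD uD euw wO); rewrite (negbTE wS).
    exact (comps_edge esym HD uD euw wO).
  have cD : c \in D := conn_stay (P := fun u => u \in D) cl vD Hconn.
  by have := comps_notin HD cD; rewrite cO.
have inDxy : forall D w, D \in comps e Om -> D \subset C -> w \in D -> w \in W ->
    w \in (\bigcup_(D in comps e Om | (D \subset C) && ~~ [disjoint D & nbr e x]) D) :&: W
       :|: (\bigcup_(D in comps e Om | (D \subset C) && [disjoint D & nbr e x]) D) :&: W.
  move=> D w HD DC wD wW; rewrite !inE wW !andbT.
  have [dj|dj] := boolP [disjoint D & nbr e x].
    by apply/orP; right; apply/bigcupP; exists D => //; rewrite HD DC dj.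
  by apply/orP; left; apply/bigcupP; exists D => //; rewrite HD DC dj.
have C1S : C1 \in comps e S.
  have [v1 v1O E1] := imsetP HC1; rewrite inE in v1O.
  have -> : C1 = Defs.comp e S v1.
    apply/setP => u; apply/idP/idP.
      by rewrite E1 !inE; exact: connS.
    rewrite inE => Hc; apply: (conn_stay (P := fun u => u \in C1) _ _ Hc); last first.
      by rewrite E1 inE connect0.
    move=> u' w uD /and3P[_ wS euw]; have [wO|wO] := boolP (w \in Om).
      by have := in_nbrs HC1 uD euw wO; rewrite -ES (negbTE wS).
    exact (comps_edge esym HC1 uD euw wO).
  exact: comp_in_comps (notS _ v1O).
have C1C : C1 != C.
  apply/eqP => E; have cC1 : c \in C1 by rewrite E.
  by have := comps_notin HC1 cC1; rewrite cO.
have [c1|nc1] := classic (exists2 t, t \in Om & Om :\: S = nbr e t :&: C); first by left.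
have [c2|nc2] := classic (exists2 t, t \in Om & Om = cnbr e t); first by right; left.
right; right => z zW; split => [zO|].
  have [zS|zS] := boolP (z \in S).
    left; apply/andP; split.
      have zN1 : z \in nbrs e C1 by rewrite -ES.
      have [c1' c1D [ec1z _]] := nbrsP _ HC1 zN1.
      apply/ndisjP; exists c1'; split; first by rewrite inE esym.
      rewrite inE (Wn z c1' zW) ?andbT; last by rewrite esym.
      by apply/bigcupP; exists C1 => //; rewrite C1S C1C.
    apply/ndisjP; apply: NNPP => nn.
    have noD : forall D u, D \in comps e Om -> D \subset C -> u \in D -> e z u -> False.
      move=> D u HD DC uD ezu; apply: nn; exists u; split; first by rewrite inE.
      exact: inDxy HD DC uD (Wn z u zW ezu).
    apply: nc1; exists z => //; apply/setP => a; rewrite !inE.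
    apply/idP/idP => [/andP[aS aO]|/andP[eza aC]].
      rewrite (P1 a aO aS) andbT; apply/negPn/negP => nza.
      have za : z != a by apply/eqP => E; rewrite -E zS in aS.
      have [D HD /andP[zN aN]] := F2 z a zO aO za nza.
      have [d d1D [eda _]] := nbrsP _ HD aN.
      have dC : d \in C by apply: Cedge (P1 a aO aS) _ (notS _ (comps_notin HD d1D)); rewrite esym.
      have DC := compOmS D d HD d1D dC.
      have [d' d'D [ed'z _]] := nbrsP _ HD zN.
      by apply: (noD D d') => //; rewrite esym.
    rewrite (comps_notin HC aC) /=.
    have [aO|aO] := boolP (a \in Om) => //.
    have HD := comp_in_comps e aO.
    have aD : a \in Defs.comp e Om a by rewrite inE connect0.
    by case: (noD _ a HD (compOmS _ a HD aD aC) aD eza).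
  have zC := P1 z zO zS.
  right; split.
  - apply/negPn/negP => /ndisjP[u [uz]]; rewrite inE => /andP[/bigcupP[D' /andP[HD' D'C] uD'] _].
    have uC : u \in C by apply: Cedge zC _ (comps_notin HD' uD'); rewrite inE in uz.
    by move/eqP: D'C; apply; exact (comps_inter esym HD' HC uD' uC).
  - apply/ndisjP; have [ezx|nzx] := boolP (e z x).
      by exists x; rewrite !inE ezx eqxx.
    have zx : z != x by apply/eqP => E; rewrite E xS in zS.
    have [D HD /andP[zN xN]] := F2 z x zO xO zx nzx.
    have [d dD [edz _]] := nbrsP _ HD zN.
    have dC : d \in C by apply: Cedge zC _ (notS _ (comps_notin HD dD)); rewrite esym.
    have DC := compOmS D d HD dD dC.
    have [d'' d''D [ed''x _]] := nbrsP _ HD xN.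
    exists d; split; first by rewrite inE esym.
    rewrite !inE (Wn z d zW) ?andbT; last by rewrite esym.
    apply/orP; right; apply/bigcupP; exists D => //; rewrite HD DC /=.
    by apply/ndisjP; exists d''; rewrite inE esym.
  - apply/ndisjP; have [ezy|nzy] := boolP (e z y).
      by exists y; rewrite !inE ezy eqxx.
    have zy : z != y by apply/eqP => E; rewrite E yS in zS.
    have [D HD /andP[zN yN]] := F2 z y zO yO zy nzy.
    have [d dD [edz _]] := nbrsP _ HD zN.
    have dC : d \in C by apply: Cedge zC _ (notS _ (comps_notin HD dD)); rewrite esym.
    have DC := compOmS D d HD dD dC.
    have [dj|dj] := boolP [disjoint D & nbr e x].
      exists d; split; first by rewrite inE esym.
      rewrite !inE (Wn z d zW) ?andbT; last by rewrite esym.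
      by apply/orP; right; apply/bigcupP; exists D => //; rewrite HD DC.
    have [d'' [d''D d''x]] := ndisjP _ _ dj.
    have xN : x \in nbrs e D by move: d''x; rewrite inE esym => ed; exact (in_nbrs HD d''D ed xO).
    by have := P3 D HD DC; rewrite npl.
  - apply/ndisjP; apply: NNPP => nn.
    have allO : forall u, e z u -> u \in Om.
      move=> u ezu; apply/negPn/negP => uO.
      have uC : u \in C := Cedge z u zC ezu (notS _ uO).
      have HD := comp_in_comps e uO.
      have uD : u \in Defs.comp e Om u by rewrite inE connect0.
      apply: nn; exists u; split; first by rewrite inE.
      exact: inDxy HD (compOmS _ u HD uD uC) uD (Wn z u zW ezu).
    apply: nc2; exists z => //; apply/setP => a; rewrite !inE.
    apply/idP/idP => [aO|/orP[/eqP->//|/allO//]].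
    have [az|az] := eqVneq a z; first by [].
    have [eza|nza] := boolP (e z a); first by apply/orP; right.
    have za : z != a by rewrite eq_sym az.
    have [D HD /andP[zN _]] := F2 z a zO aO za nza.
    have [d dD [edz _]] := nbrsP _ HD zN.
    by have := comps_notin HD dD; rewrite allO // esym.
move=> Hab; apply/negPn/negP => zO.
have zS := notS z zO.
have inDxyE : forall w, w \in (\bigcup_(D in comps e Om | (D \subset C) && ~~ [disjoint D & nbr e x]) D) :&: W
       :|: (\bigcup_(D in comps e Om | (D \subset C) && [disjoint D & nbr e x]) D) :&: W ->
    exists2 D, D \in comps e Om & D \subset C /\ w \in D.
  move=> w; rewrite !inE => /orP[/andP[/bigcupP[D /andP[HD /andP[DC _]] wD] _]|/andP[/bigcupP[D /andP[HD /andP[DC _]] wD] _]];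
  by exists D.
case: Hab => [/andP[H1 H2]|].
  have [u [uz]] := ndisjP _ _ H1; have [w [wz /inDxyE[D HD [DC wD]]]] := ndisjP _ _ H2.
  rewrite inE => /andP[/bigcupP[D' /andP[HD' D'C] uD'] _].
  have wC := subsetP DC w wD.
  have zC : z \in C by apply: Cedge wC _ zS; rewrite esym; rewrite inE in wz.
  have zD' : z \in D' by apply: (comps_edge esym HD' uD') zS; rewrite esym; rewrite inE in uz.
  by move/eqP: D'C; apply; exact (comps_inter esym HD' HC zD' zC).
case=> _ H1 H2 H3.
have [u1 [u1z u1x]] := ndisjP _ _ H1; have [u2 [u2z u2y]] := ndisjP _ _ H2.
have [w [wz /inDxyE[D HD [DC wD]]]] := ndisjP _ _ H3.
rewrite inE in wz; rewrite inE in u1z; rewrite inE in u2z.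
have zD : z \in D by apply: (comps_edge esym HD wD) zO; rewrite esym.
have same : forall D2 u, D2 \in comps e Om -> u \in D2 -> e z u -> D2 = D.
  move=> D2 u HD2 uD2 ezu.
  have uD : u \in D := comps_edge esym HD zD ezu (comps_notin HD2 uD2).
  exact (comps_inter esym HD2 HD uD2 uD).
have [dj|dj] := boolP [disjoint D & nbr e x].
  move: u1x; rewrite !inE => /orP[/eqP E|/andP[/bigcupP[D2 /andP[HD2 /andP[_ dj2]] uD2] _]].
    by move: dj; rewrite disjoint_sym => /disjointFl/(_ zD); rewrite inE esym -E u1z.
  by move: dj2; rewrite (same D2 u1 HD2 uD2 u1z) dj.
move: u2y; rewrite !inE => /orP[/eqP E|/andP[/bigcupP[D2 /andP[HD2 /andP[_ dj2]] uD2] _]].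
  have u2O : u2 \in Om by rewrite E.
  have yN : y \in nbrs e D by rewrite -E; exact (in_nbrs HD zD u2z u2O).
  have [d'' [d''D d''x]] := ndisjP _ _ dj.
  have xN : x \in nbrs e D by move: d''x; rewrite inE esym => ed; exact (in_nbrs HD d''D ed xO).
  by have := P3 D HD DC; rewrite npl.
by move: dj2; rewrite (same D2 u2 HD2 uD2 u2z) (negbTE dj).
Qed.
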